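(* Let $A$ and $C$ be machines. There exists a machine $B$ such that $B$ is a functional reduction of $A$ and $C$ is a state reduction of $B$ if and only if there exists a machine $B'$ such that $B'$ is a state reduction of $A$ and $C$ is a functional reduction of $B'$.
   Context: For a set $S$, a transition function on $S$ is a function $S\to S$, and $\Phi_S$ denotes the set of all of them. A machine $S\times\Phi'_S$ is a pair consisting of a set $S$ and a subset $\Phi'_S\subseteq\Phi_S$. Functional reduction: given machines $S\times\Phi'_1$ and $S\times\Phi'_2$ on the same state set, the latter is a functional reduction of the former iff $\Phi'_2\subseteq\Phi'_1$. State reduction: given machines $S\times\Phi'_S$ and $S'\times\Phi'_{S'}$, the latter is a state reduction of the former iff (1) $S'\subseteq S$; (2) for every $\varphi'\in\Phi'_{S'}$ there exists $\varphi\in\Phi'_S$ with $\varphi'(s)=\varphi(s)$ for all $s\in S'$; (3) for every $\varphi\in\Phi'_S$ with $\varphi(S')\subseteq S'$ there exists $\varphi'\in\Phi'_{S'}$ with $\varphi'(s)=\varphi(s)$ for all $s\in S'$. *)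

(* Defs.v *)
Set Implicit Arguments.
(* Sets of states are predicates on an ambient type U;
   a transition function on S is a function {x | S x} -> {x | S x};
   a machine with state set S is a set Phi of such functions. *)

Definition trans (U : Type) (S : U -> Prop) : Type := sig S -> sig S.

Definition functional_reduction (U : Type) (S : U -> Prop)
  (Phi1 Phi2 : trans S -> Prop) : Prop :=
  forall phi, Phi2 phi -> Phi1 phi.

Definition state_reduction (U : Type) (S : U -> Prop) (Phi : trans S -> Prop)
  (S' : U -> Prop) (Phi' : trans S' -> Prop) : Prop :=
  exists incl : forall x, S' x -> S x,
    (forall phi' : trans S', Phi' phi' ->
       exists phi : trans S, Phi phi /\
         forall (s : U) (hs : S' s),
           proj1_sig (phi' (exist S' s hs)) = proj1_sig (phi (exist S s (incl s hs))))
    /\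
    (forall phi : trans S, Phi phi ->
       (forall (s : U) (hs : S' s), S' (proj1_sig (phi (exist S s (incl s hs))))) ->
       exists phi' : trans S', Phi' phi' /\
         forall (s : U) (hs : S' s),
           proj1_sig (phi' (exist S' s hs)) = proj1_sig (phi (exist S s (incl s hs)))).

(* Main.v *)
Require Import Defs.

Theorem lemma3 (U : Type) (SA : U -> Prop) (PhiA : trans SA -> Prop)
  (SC : U -> Prop) (PhiC : trans SC -> Prop) :
  (exists PhiB : trans SA -> Prop,
      functional_reduction PhiA PhiB /\ state_reduction PhiB PhiC)
  <->
  (exists PhiB' : trans SC -> Prop,
      state_reduction PhiA PhiB' /\ functional_reduction PhiB' PhiC).
Proof.
  split.
  - intros [PhiB [HF [incl [H2 H3]]]].
    exists (fun phi' : trans SC => exists phi : trans SA, PhiA phi /\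
      forall (s : U) (hs : SC s),
        proj1_sig (phi' (exist SC s hs)) = proj1_sig (phi (exist SA s (incl s hs)))).
    split.
    + exists incl. split.
      * intros phi' Hp. exact Hp.
      * intros phi Hphi Hpres.
        exists (fun x : sig SC => exist SC
                  (proj1_sig (phi (exist SA (proj1_sig x) (incl _ (proj2_sig x)))))
                  (Hpres _ (proj2_sig x))).
        split.
        -- exists phi. split; [exact Hphi | intros; reflexivity].
        -- intros; reflexivity.
    + intros phi' Hp. destruct (H2 phi' Hp) as [phi [Hb Hag]].
      exists phi. split; [apply HF; exact Hb | exact Hag].
  - intros [PhiB' [[incl [H2 H3]] HF]].
    exists (fun phi : trans SA => PhiA phi /\
      ((forall (s : U) (hs : SC s), SC (proj1_sig (phi (exist SA s (incl s hs))))) ->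
       exists phi' : trans SC, PhiC phi' /\
         forall (s : U) (hs : SC s),
           proj1_sig (phi' (exist SC s hs)) = proj1_sig (phi (exist SA s (incl s hs))))).
    split.
    + intros phi [H _]. exact H.
    + exists incl. split.
      * intros phi' Hp. destruct (H2 phi' (HF phi' Hp)) as [phi [Ha Hag]].
        exists phi. split; [split; [exact Ha|] | exact Hag].
        intros _. exists phi'. split; [exact Hp | exact Hag].
      * intros phi [Ha Hc] Hpres. exact (Hc Hpres).
Qed.
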